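(* There are infinitely many SP twins, i.e. infinitely many natural numbers $m$ such that both $m$ and $m+1$ are SP numbers.
   Context: A Square-Prime (SP) number is a positive integer of the form $p a^2$ where $p$ is a prime and $a \ge 2$ is a natural number (i.e. $a \neq 1$). An SP twin is a pair of consecutive natural numbers $m, m+1$ that are both SP numbers (e.g. $27 = 3\cdot 9$ and $28 = 7 \cdot 4$). *)

(* Defs.v *)
From mathcomp Require Import all_boot.
Set Implicit Arguments. Unset Strict Implicit. Unset Printing Implicit Defensive.

Definition SP (n : nat) : Prop :=
  exists p a : nat, prime p /\ 2 <= a /\ n = p * a ^ 2.

Definition SP_twin (m : nat) : Prop := SP m /\ SP m.+1.

(* Main.v *)
Require Import Defs.
From mathcomp Require Import all_boot.
From mathcomp Require Import zify.

Lemma step (A B : nat) : 7 * B ^ 2 = 3 * A ^ 2 + 1 ->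
  7 * (36 * A + 55 * B) ^ 2 = 3 * (55 * A + 84 * B) ^ 2 + 1.
Proof. move=> h. nia. Qed.

Lemma seqAB (n : nat) : exists A B : nat,
  n <= A /\ 2 <= A /\ 2 <= B /\ 7 * B ^ 2 = 3 * A ^ 2 + 1.
Proof.
elim: n => [|n [A [B [h1 [h2 [h3 h4]]]]]].
  by exists 3, 2.
exists (55 * A + 84 * B), (36 * A + 55 * B); split; [lia|split; [lia|split; [lia|]]].
exact: step.
Qed.

Theorem mainTheorem4 : forall N : nat, exists m : nat, N <= m /\ SP_twin m.
Proof.
move=> N; have [A [B [h1 [h2 [h3 h4]]]]] := seqAB N.
exists (3 * A ^ 2); split; first nia.
split.
  by exists 3, A.
exists 7, B; split => //; split => //; rewrite -addn1 h4.
done.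
Qed.
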